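(* Let $n\ge27$, $\mathcal{X},\mathcal{Y}$ finite with $|\mathcal{X}|,|\mathcal{Y}|\ge2$, and $\mathbf{X}$ a random vector on $\mathcal{X}^n$. Let $w,\tilde w\in\mathcal{P}(\mathcal{Y}|\mathcal{X})$. For every discrete random variable $U$ such that $U,\mathbf{X}$ are jointly distributed (with channel outputs generated from $\mathbf{X}$ alone), every $u$ in the support of $U$, and every $\mathbf{y}\in\mathcal{Y}^n$ with $\tilde w_n(\mathbf{y}|u)>0$, $$\log_2\frac{w_n(\mathbf{y}|u)}{\tilde w_n(\mathbf{y}|u)}\le n\sup_{\hat w\in\mathcal{P}(\mathcal{Y}|\mathcal{X}),\ \hat p\in\mathcal{P}(\mathcal{X})}\mathbb{D}_{\hat w}(w\|\tilde w|\hat p)+2|\mathcal{X}||\mathcal{Y}|\log_2 n.$$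
   Context: $\mathcal{P}(\mathcal{Y}|\mathcal{X})$ is the set of conditional distributions from $\mathcal{X}$ to $\mathcal{Y}$ and $\mathcal{P}(\mathcal{X})$ the set of distributions on $\mathcal{X}$. $w_n(\mathbf{y}|u)=\sum_{\mathbf{x}}w^n(\mathbf{y}|\mathbf{x})p_{\mathbf{X}|U}(\mathbf{x}|u)$ with $w^n(\mathbf{y}|\mathbf{x})=\prod_t w(y_t|x_t)$, and similarly $\tilde w_n$. $\mathbb{D}_{\hat w}(w\|\tilde w|\hat p)=\sum_{y,x}\hat w(y|x)\hat p(x)\log_2\frac{w(y|x)}{\tilde w(y|x)}$. *)

(* Defs.v *)
From HB Require Import structures.
From mathcomp Require Import all_boot all_order all_algebra.
From mathcomp Require Import all_classical all_reals all_analysis.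
Set Implicit Arguments. Unset Strict Implicit. Unset Printing Implicit Defensive.
Import Order.TTheory GRing.Theory Num.Theory.
Local Open Scope ring_scope.

Definition log2 (R : realType) (x : R) : R := ln x / ln 2.

(* extended-real log2 (a / b) for a, b >= 0, with the conventions
   log(0/0) = 0, log(0/b) = -oo (b>0), log(a/0) = +oo (a>0) *)
Definition log2ratio (R : realType) (a b : R) : \bar R :=
  if a == 0 then (if b == 0 then 0%E else -oo%E)
  else if b == 0 then +oo%E else (log2 (a / b))%:E.

Definition is_dist (R : realType) (T : finType) (p : T -> R) : Prop :=
  (forall t, 0 <= p t) /\ \sum_(t : T) p t = 1.

Definition is_channel (R : realType) (X Y : finType) (w : X -> Y -> R) : Prop :=
  forall x, is_dist (w x).

Definition chan_n (R : realType) (X Y : finType) (n : nat) (w : X -> Y -> R)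
  (x : {ffun 'I_n -> X}) (y : {ffun 'I_n -> Y}) : R :=
  \prod_(t < n) w (x t) (y t).

(* w_n(y|u) = sum_x w^n(y|x) p_{X|U}(x|u), where pXu = p_{X|U}(.|u) *)
Definition chan_nU (R : realType) (X Y : finType) (n : nat) (w : X -> Y -> R)
  (pXu : {ffun 'I_n -> X} -> R) (y : {ffun 'I_n -> Y}) : R :=
  \sum_(x : {ffun 'I_n -> X}) chan_n w x y * pXu x.

(* D_{hw}(w || tw | hp) = sum_{y,x} hw(y|x) hp(x) log2 (w(y|x)/tw(y|x)),
   in the extended reals (0 * (+-oo) = 0) *)
Definition condD (R : realType) (X Y : finType) (hw w tw : X -> Y -> R)
  (hp : X -> R) : \bar R :=
  (\sum_(y : Y) \sum_(x : X) (hw x y * hp x)%:E * log2ratio (w x y) (tw x y))%E.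

Definition supD (R : realType) (X Y : finType) (w tw : X -> Y -> R) : \bar R :=
  ereal_sup [set condD hw w tw hp | hw in [set hw | is_channel hw] &
                                    hp in [set hp | is_dist hp]]%classic.

(* Main.v *)
Require Import Defs.
From HB Require Import structures.
From mathcomp Require Import all_boot all_order all_algebra.
From mathcomp Require Import all_classical all_reals all_analysis.
Import Order.TTheory GRing.Theory Num.Theory.
Local Open Scope ring_scope.

Lemma condD_point (R : realType) (X Y : finType) (w tw : X -> Y -> R) x0 y0 :
  (log2ratio (w x0 y0) (tw x0 y0) <= supD w tw)%E.
Proof.
apply: ereal_sup_ubound => /=.
exists (fun (_ : X) (y : Y) => if y == y0 then 1 else 0 : R).
  move=> x; split=> [t|]; first by case: ifP.
  by rewrite -big_mkcond big_pred1_eq.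
exists (fun x : X => if x == x0 then 1 else 0 : R).
  split=> [t|]; first by case: ifP.
  by rewrite -big_mkcond big_pred1_eq.
rewrite /condD.
under eq_bigr => y _.
  under eq_bigr => x _.
    have -> : ((((if y == y0 then 1 else 0) * (if x == x0 then 1 else 0))%:E
       * log2ratio (w x y) (tw x y)) =
       (if x == x0 then (if y == y0 then log2ratio (w x0 y0) (tw x0 y0) else 0)
        else 0))%E.
      case: eqP => [->|_]; case: eqP => [->|_];
        by rewrite ?mulr1 ?mulr0 ?mul1e ?mul0e.
  over.
  rewrite -big_mkcond big_pred1_eq.
over.
by rewrite /= -big_mkcond big_pred1_eq.
Qed.

Theorem lemma31 (R : realType) (X Y : finType) (n : nat)
  (hn : (27 <= n)%N) (hX : (2 <= #|X|)%N) (hY : (2 <= #|Y|)%N)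
  (w tw : X -> Y -> R) (hw : is_channel w) (htw : is_channel tw)
  (U : choiceType) (P : U -> {ffun 'I_n -> X} -> R)
  (hP0 : forall u x, 0 <= P u x)
  (hP1 : (\esum_(ux in [set: U * {ffun 'I_n -> X}]) (P ux.1 ux.2)%:E = 1)%E)
  (u : U) (hu : 0 < \sum_(x : {ffun 'I_n -> X}) P u x)
  (y : {ffun 'I_n -> Y}) :
  let pXu := fun x => P u x / \sum_(x' : {ffun 'I_n -> X}) P u x' in
  0 < chan_nU tw pXu y ->
  (log2ratio (chan_nU w pXu y) (chan_nU tw pXu y)
    <= n%:R%:E * supD w tw + (2 * #|X|%:R * #|Y|%:R * log2 (n%:R : R))%:E)%E.
Proof.
move=> pXu hb.
have ln2 : 0 < ln (2 : R) by apply: ln_gt0; rewrite ltr1n.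
have hlogn : 0 <= 2 * #|X|%:R * #|Y|%:R * log2 (n%:R : R).
  rewrite mulr_ge0 // /log2 divr_ge0 ?(ltW ln2) // ln_ge0 // ler1n.
  by apply: leq_trans hn.
have pX0 : forall x, 0 <= pXu x by move=> x; rewrite /pXu divr_ge0 // ltW.
have wge0 : forall x y, 0 <= w x y by move=> x y'; case: (hw x) => ->.
have twge0 : forall x y, 0 <= tw x y by move=> x y'; case: (htw x) => ->.
case: (boolP [exists xy : X * Y, (0 < w xy.1 xy.2) && (tw xy.1 xy.2 == 0)]).
  case/existsP => -[x0 y0] /andP [/= wp /eqP tw0].
  have := @condD_point _ _ _ w tw x0 y0.
  rewrite /log2ratio tw0 eqxx (gt_eqF wp) leye_eq => /eqP ->.
  rewrite gt0_muley ?lte_fin ?ltr0n; last by apply: leq_trans hn.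
  by rewrite addye // leey.
rewrite negb_exists => /forallP hB.
have /card_gt0P [x0 _] : (0 < #|X|)%N by apply: leq_trans hX.
have /card_gt0P [y0 _] : (0 < #|Y|)%N by apply: leq_trans hY.
case: (@arg_maxP _ _ (X * Y)%type (x0, y0) xpredT (fun i => w i.1 i.2 / tw i.1 i.2) isT).
move=> [xm ym] _ /= hmax.
set r := w xm ym / tw xm ym.
have r0 : 0 <= r by rewrite divr_ge0.
have wr : forall x y, w x y <= r * tw x y.
  move=> x y'; have := hB (x, y'); rewrite /= negb_and -leNgt.
  case/orP => [w0|tw0].
    have -> : w x y' = 0 by apply/le_anti; rewrite w0 wge0.
    by rewrite mulr_ge0.
  have twp : 0 < tw x y' by rewrite lt_neqAle eq_sym tw0 twge0.
  by rewrite -ler_pdivrMr // (hmax (x, y')).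
have cn : forall x, chan_n w x y <= r ^+ n * chan_n tw x y.
  move=> x; have -> : r ^+ n = \prod_(t < n) r by rewrite prodr_const card_ord.
  rewrite /chan_n -big_split /=; apply: ler_prod => t _.
  by rewrite wge0 wr.
have cnU : chan_nU w pXu y <= r ^+ n * chan_nU tw pXu y.
  rewrite /chan_nU mulr_sumr; apply: ler_sum => x _; rewrite mulrA.
  by apply: ler_wpM2r.
set a := chan_nU w pXu y in cnU *.
set b := chan_nU tw pXu y in hb cnU *.
have age0 : 0 <= a.
  rewrite /a /chan_nU; apply: sumr_ge0 => x _; apply: mulr_ge0 => //.
  by apply: prodr_ge0 => t _.
rewrite /log2ratio (gt_eqF hb); case: eqP => [_|a0]; first by rewrite leNye.
have apos : 0 < a by rewrite lt_neqAle eq_sym age0 andbT; apply/eqP.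
have ha : a / b <= r ^+ n by rewrite ler_pdivrMr.
have rnpos : 0 < r ^+ n by apply: lt_le_trans ha; rewrite divr_gt0.
have n0 : (0 < n)%N by apply: leq_trans hn.
have rpos : 0 < r.
  rewrite lt_neqAle r0 andbT; apply/eqP => r0'.
  move: rnpos; rewrite -r0' expr0n; have /negbTE -> : n != 0%N by rewrite -lt0n.
  by rewrite ltxx.
have twm : tw xm ym != 0.
  by apply/eqP => h; move: rpos; rewrite /r h invr0 mulr0 ltxx.
have wm : w xm ym != 0.
  by apply/eqP => h; move: rpos; rewrite /r h mul0r ltxx.
have := @condD_point _ _ _ w tw xm ym.
rewrite /log2ratio (negbTE twm) (negbTE wm) -/r => hsup.
apply: le_trans (leeDl _ _); last by rewrite lee_fin.
apply: (@le_trans _ _ (n%:R * log2 r)%:E).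
  rewrite lee_fin /log2 mulrA; apply: ler_wpM2r; first by rewrite invr_ge0 ltW.
  rewrite mulr_natl -lnXn //; rewrite ler_ln // posrE divr_gt0 //.
rewrite EFinM; apply: lee_wpmul2l => //; by rewrite lee_fin ler0n.
Qed.
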